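(* Let $\mathbb F$ be any field. The problem of classifying two-dimensional vector subspaces $V\subset \mathbb F^{n\times n}$ ($n=1,2,\dots$) consisting of pairwise commuting matrices, up to similarity $V\mapsto S^{-1}VS:=\{S^{-1}AS\mid A\in V\}$ with nonsingular $S\in\mathbb F^{n\times n}$, is wild. Moreover, if $\mathbb F$ is not the field with two elements, then the problem of classifying, up to the same similarity, those two-dimensional vector spaces of commuting $n\times n$ matrices over $\mathbb F$ that contain a nonsingular matrix is also wild.
   Context: Two pairs $(M,N)$, $(M',N')$ of $n\times n$ matrices over $\mathbb F$ are similar if $(S^{-1}MS,S^{-1}NS)=(M',N')$ for some nonsingular $S$. A matrix classification problem $\mathcal M$ is given by a set $\mathcal M_1$ of tuples of matrices over $\mathbb F$ and a set $\mathcal M_2$ of admissible transformations on them. It is called wild if there is a tuple $M(x,y)=(M_1(x,y),\dots,M_t(x,y))$ of matrices whose entries are noncommutative polynomials in $x,y$ over $\mathbb F$ such that (i) $M(A,B)\in\mathcal M_1$ for all $A,B\in\mathbb F^{n\times n}$ and all $n\ge1$ (each scalar entry $\alpha$ being replaced by $\alpha I_n$), and (ii) $M(A,B)$ can be carried to $M(A',B')$ by transformations from $\mathcal M_2$ if and only if the pairs $(A,B)$ and $(A',B')$ are similar. (A two-dimensional space of matrices is represented by a basis $(A,B)$, determined up to change of basis.) *)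

(* Defs.v *)
From HB Require Import structures.
From mathcomp Require Import all_boot all_order all_algebra.
Set Implicit Arguments. Unset Strict Implicit. Unset Printing Implicit Defensive.
Import GRing.Theory.
Local Open Scope ring_scope.

Inductive ncpoly (F : Type) : Type :=
| NCconst of F
| NCx
| NCy
| NCadd of ncpoly F & ncpoly F
| NCmul of ncpoly F & ncpoly F.
Arguments NCx {F}. Arguments NCy {F}.

Fixpoint nceval (F : fieldType) (n : nat) (p : ncpoly F) (A B : 'M[F]_n) : 'M[F]_n :=
  match p with
  | NCconst c => c%:M
  | NCx => A
  | NCy => B
  | NCadd p q => nceval p A B + nceval q A B
  | NCmul p q => nceval p A B *m nceval q A B
  end.

Definition mxsubst (F : fieldType) (k n : nat) (P : 'I_k -> 'I_k -> ncpoly F)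
  (A B : 'M[F]_n) : 'M[F]_(\sum_(i < k) n, \sum_(j < k) n) :=
  \mxblock_(i < k, j < k) nceval (P i j) A B.

Definition simpair (F : fieldType) (n : nat) (A B A' B' : 'M[F]_n) : Prop :=
  exists2 S : 'M[F]_n, S \in unitmx &
    invmx S *m A *m S = A' /\ invmx S *m B *m S = B'.

Definition span2 (F : fieldType) (m : nat) (A B : 'M[F]_m) : Prop :=
  \rank (col_mx (mxvec A) (mxvec B)) = 2%N.

(* Objects of the problem: bases (A,B) of 2-dim spaces of commuting matrices *)
Definition comm_space (F : fieldType) (m : nat) (A B : 'M[F]_m) : Prop :=
  span2 A B /\ A *m B = B *m A.

Definition comm_space_nonsing (F : fieldType) (m : nat) (A B : 'M[F]_m) : Prop :=
  comm_space A B /\ exists a b : F, (a *: A + b *: B) \in unitmx.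

(* Admissible transformations: similarity of the space, i.e. similarity
   combined with change of basis (A,B) |-> (aA+bB, cA+dB), ad-bc <> 0. *)
Definition space_sim (F : fieldType) (m : nat) (A B A' B' : 'M[F]_m) : Prop :=
  exists a b c d : F, a * d - b * c != 0 /\
    simpair (a *: A + b *: B) (c *: A + d *: B) A' B'.

Definition wild (F : fieldType)
  (M1 : forall m, 'M[F]_m -> 'M[F]_m -> Prop)
  (M2 : forall m, 'M[F]_m -> 'M[F]_m -> 'M[F]_m -> 'M[F]_m -> Prop) : Prop :=
  exists (k : nat) (P1 P2 : 'I_k -> 'I_k -> ncpoly F),
    (forall (n : nat) (A B : 'M[F]_n), (0 < n)%N ->
        M1 _ (mxsubst P1 A B) (mxsubst P2 A B)) /\
    (forall (n : nat) (A B A' B' : 'M[F]_n), (0 < n)%N ->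
        (M2 _ (mxsubst P1 A B) (mxsubst P2 A B) (mxsubst P1 A' B') (mxsubst P2 A' B')
         <-> simpair A B A' B')).

(* Main.v *)
Require Import Defs.
From HB Require Import structures.
From mathcomp Require Import all_boot all_order all_algebra.
Set Implicit Arguments. Unset Strict Implicit. Unset Printing Implicit Defensive.
Import GRing.Theory.
Local Open Scope ring_scope.

Lemma chase_alg (F : fieldType) (n : nat) (A B A' B' : 'M[F]_n) (a b d : F)
  (s00 s01 s02 s03 s11 s12 s13 s14 s15 s22 s23 s24 s25 s32 s33 s34 s35
   s44 s45 s46 s47 s54 s55 s56 s57 s66 s67 s76 s77 s88 : 'M[F]_n) :
  0 = s01 -> 0 = s02 -> 0 = s03 ->
  a *: s00 = s11 -> a *: s01 = s12 -> a *: s02 = s14 -> a *: s03 = s15 ->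
  0 = s13 -> a *: s11 = s22 -> a *: s12 = s24 -> a *: s13 = s25 -> 0 = s23 ->
  b *: s01 = s32 -> b *: s02 = s34 -> b *: s03 = s35 -> d *: s00 = s33 ->
  a *: s22 = s44 -> a *: s23 = s45 -> a *: s24 = s46 -> a *: s25 = s47 ->
  b *: s12 + a *: s32 = s54 -> b *: s13 + a *: s33 = s55 ->
  b *: s14 + a *: s34 = s56 -> b *: s15 + a *: s35 = s57 ->
  b *: A *m s34 + a *: s44 = s66 -> b *: A *m s35 + a *: s45 = s67 ->
  d *: A *m s33 = s66 *m A' + s67 *m B' ->
  b *: s24 + b *: B *m s34 + a *: s54 = s76 ->
  b *: s25 + b *: B *m s35 + a *: s55 = s77 ->
  d *: s23 + d *: B *m s33 = s76 *m A' + s77 *m B' ->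
  b *: s46 + b *: (A + B) *m s56 + a *: s66 + a *: s76 = s88 ->
  b *: s47 + b *: (A + B) *m s57 + a *: s67 + a *: s77 = s88 ->
  [/\ (a ^+ 5) *: s00 = (a ^+ 3 * d) *: s00,
      (d * d) *: (A *m s00) = a ^+ 4 *: (s00 *m A') &
      (d * d) *: (B *m s00) = (a ^+ 2 * d) *: (s00 *m B')].
Proof.
move=> *; subst.
repeat match goal with H : _ = _ |- _ => move: H end.
rewrite !(scaler0, mulmx0, mul0mx, add0r, addr0, scalerA, mulrA).
rewrite -?scalemxAl -?scalemxAr ?scalerA ?mulrA.
move=> h1 h2 h3.
rewrite !exprS expr0 !mulr1 !mulrA.
by split.
Qed.

Section Design.
Variable F : fieldType.

Definition p1 (i j : nat) : ncpoly F :=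
  match i, j with
  | 1, 0 | 2, 1 | 4, 2 | 5, 3 | 6, 4 | 7, 5 | 8, 6 | 8, 7 => NCconst 1
  | _, _ => NCconst 0
  end.
Definition p2 (i j : nat) : ncpoly F :=
  match i, j with
  | 3, 0 | 5, 1 | 7, 2 | 8, 4 => NCconst 1
  | 6, 3 => NCx
  | 7, 3 => NCy
  | 8, 5 => NCadd NCx NCy
  | _, _ => NCconst 0
  end.
Definition P1 (i j : 'I_9) := p1 i j.
Definition P2 (i j : 'I_9) := p2 i j.

Variable n : nat.
Local Notation m := (\sum_(i < 9) n)%N.
Implicit Types M N : 'M[F]_m.

Lemma blkM M N (i j : 'I_9) :
  submxblock (M *m N) i j = \sum_l submxblock M i l *m submxblock N l j.
Proof.
by rewrite -[M]submxblockK -[N]submxblockK mul_mxblock mxblockK !submxblockK.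
Qed.

Lemma blkZ a M (i j : 'I_9) : submxblock (a *: M) i j = a *: submxblock M i j.
Proof. by apply/matrixP=> r c; rewrite !mxE. Qed.

Lemma big9 (V : nmodType) (G : 'I_9 -> V) :
  \sum_(l < 9) G l = G (inord 0) + G (inord 1) + G (inord 2) + G (inord 3)
    + G (inord 4) + G (inord 5) + G (inord 6) + G (inord 7) + G (inord 8).
Proof.
rewrite !big_ord_recr big_ord0 /= add0r.
by congr (_ + _ + _ + _ + _ + _ + _ + _ + _); congr G; apply/val_inj; rewrite /= inordK.
Qed.

Lemma blkE (P : 'I_9 -> 'I_9 -> ncpoly F) (A B : 'M[F]_n) i j :
  submxblock (mxsubst P A B) i j = nceval (P i j) A B.
Proof. by rewrite /mxsubst mxblockK. Qed.

Lemma P1E i j : (i < 9)%N -> (j < 9)%N -> P1 (inord i) (inord j) = p1 i j.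
Proof. by move=> hi hj; rewrite /P1 !inordK. Qed.
Lemma P2E i j : (i < 9)%N -> (j < 9)%N -> P2 (inord i) (inord j) = p2 i j.
Proof. by move=> hi hj; rewrite /P2 !inordK. Qed.

Lemma sc0 : (0 : F)%:M = 0 :> 'M[F]_n.
Proof. by apply/matrixP=> r c; rewrite !mxE mul0rn. Qed.


Lemma scale1mx a (X : 'M[F]_n) : (a *: 1%:M) *m X = a *: X.
Proof. by rewrite -scalemxAl mul1mx. Qed.

Definition wt (i : nat) : nat := nth 0%N [:: 0; 1; 2; 2; 3; 3; 4; 4; 5]%N i.

Definition Sh (r : nat) M := forall i j : 'I_9, (wt i < wt j + r)%N -> submxblock M i j = 0.

Lemma wt_le (i : 'I_9) : (wt i <= 5)%N.
Proof. by case: i => [[|[|[|[|[|[|[|[|[|i]]]]]]]]] ]. Qed.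

Lemma Sh_mul r q M N : Sh r M -> Sh q N -> Sh (r + q) (M *m N).
Proof.
move=> hM hN i j h; rewrite blkM big1 // => l _.
case: (ltnP (wt i) (wt l + r)) => h1; first by rewrite hM // mul0mx.
rewrite hN ?mulmx0 //.
by rewrite -(ltn_add2r r) (leq_ltn_trans h1) // -addnA [(q + r)%N]addnC.
Qed.

Lemma Sh_add r M N : Sh r M -> Sh r N -> Sh r (M + N).
Proof. by move=> hM hN i j h; rewrite submxblockD hM ?hN ?addr0. Qed.

Lemma Sh_scale r c M : Sh r M -> Sh r (c *: M).
Proof. by move=> hM i j h; rewrite blkZ hM ?scaler0. Qed.

Lemma Sh_weak r q M : (q <= r)%N -> Sh r M -> Sh q M.
Proof. by move=> hqr hM i j h; apply: hM; apply: (leq_trans h); rewrite leq_add2l. Qed.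

Lemma Sh_top r M : (5 < r)%N -> Sh r M -> M = 0.
Proof.
move=> hr hM; apply/mxblockP => i j; rewrite submxblock0 hM //.
by apply: (leq_ltn_trans (wt_le i)); apply: (leq_trans hr); rewrite leq_addl.
Qed.

Lemma p1_wt i j : (wt i < wt j + 1)%N -> p1 i j = NCconst 0.
Proof.
by case: i => [|[|[|[|[|[|[|[|[|i]]]]]]]]]; case: j => [|[|[|[|[|[|[|[|[|j]]]]]]]]].
Qed.
Lemma p2_wt i j : (wt i < wt j + 2)%N -> p2 i j = NCconst 0.
Proof.
by case: i => [|[|[|[|[|[|[|[|[|i]]]]]]]]]; case: j => [|[|[|[|[|[|[|[|[|j]]]]]]]]].
Qed.

Lemma Sh_M1 (A B : 'M[F]_n) : Sh 1 (mxsubst P1 A B).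
Proof. by move=> i j h; rewrite blkE /P1 p1_wt //= sc0. Qed.
Lemma Sh_M2 (A B : 'M[F]_n) : Sh 2 (mxsubst P2 A B).
Proof. by move=> i j h; rewrite blkE /P2 p2_wt //= sc0. Qed.

Lemma M2_cube (A B : 'M[F]_n) :
  mxsubst P2 A B *m mxsubst P2 A B *m mxsubst P2 A B = 0.
Proof. exact: (Sh_top _ (Sh_mul (Sh_mul (Sh_M2 A B) (Sh_M2 A B)) (Sh_M2 A B))). Qed.


Lemma cube_lead X Z (i j : 'I_9) : Sh 1 X -> Sh 2 Z -> (wt i < wt j + 4)%N ->
  submxblock ((X + Z) *m (X + Z) *m (X + Z)) i j = submxblock (X *m X *m X) i j.
Proof.
move=> hX hZ h.
have -> : (X + Z) *m (X + Z) = X *m X + (X *m Z + Z *m X + Z *m Z).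
  by rewrite mulmxDl !mulmxDr !addrA.
have hT : Sh 3 (X *m Z + Z *m X + Z *m Z).
  apply: Sh_add; first apply: Sh_add.
  - exact: (Sh_mul hX hZ).
  - exact: (Sh_mul hZ hX).
  - exact: (@Sh_weak 4 3 _ isT (Sh_mul hZ hZ)).
rewrite mulmxDl !mulmxDr !submxblockD.
rewrite (Sh_mul (Sh_mul hX hX) hZ) // (Sh_mul hT hX) //.
by rewrite (@Sh_weak 5 4 _ isT (Sh_mul hT hZ)) // !addr0.
Qed.

Ltac simpblk e :=
  rewrite ?blkM in e; rewrite ?(big9 (V := 'M[F]_n)) in e;
  rewrite ?submxblockD ?blkZ ?blkE in e; rewrite ?P1E ?P2E // /= in e;
  do 3 rewrite ?sc0 ?scaler0 ?mul0mx ?mulmx0 ?add0r ?addr0 ?mulmx1 ?scale1mx in e.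

Lemma M1cube40 (A B : 'M[F]_n) :
  submxblock (mxsubst P1 A B *m mxsubst P1 A B *m mxsubst P1 A B) (inord 4) (inord 0) = 1%:M.
Proof.
rewrite blkM (big9 (V := 'M[F]_n)) !blkE !P1E //= !sc0 !mulmx0 !add0r !addr0 mulmx1.
rewrite blkM (big9 (V := 'M[F]_n)) !blkE !P1E //= !sc0 !mul0mx !add0r !addr0.
by rewrite mulmx1.
Qed.

Lemma blk_scalar c (i j : 'I_9) :
  submxblock (c%:M : 'M[F]_m) i j = if i == j then c%:M else 0.
Proof.
rewrite -(mxdiagZ (p_ := fun _ => n)) /mxdiag mxblockK.
by case: (i == j) => //; rewrite conform_mx_id.
Qed.

Lemma scal_cancel (P : 'M[F]_n) x y : (0 < n)%N -> P \in unitmx ->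
  x *: P = y *: P -> x = y.
Proof.
move=> n0 Pu e; have i0 : 'I_n := Ordinal n0.
have := congr1 (fun X : 'M[F]_n => (X *m invmx P) i0 i0) e.
by rewrite -!scalemxAl mulmxV // !mxE eqxx !mulr1.
Qed.

Lemma chase (A B A' B' : 'M[F]_n) (S : 'M[F]_m) (a b d : F) :
  (0 < n)%N -> S \in unitmx -> a != 0 ->
  (a *: mxsubst P1 A B + b *: mxsubst P2 A B) *m S = S *m mxsubst P1 A' B' ->
  (d *: mxsubst P2 A B) *m S = S *m mxsubst P2 A' B' ->
  simpair A B A' B'.
Proof.
move=> n0 Su a0 E1 E2.
have e1_00 := congr1 (fun M => submxblock M (inord 0) (inord 0)) E1; simpblk e1_00.
have e1_01 := congr1 (fun M => submxblock M (inord 0) (inord 1)) E1; simpblk e1_01.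
have e2_00 := congr1 (fun M => submxblock M (inord 0) (inord 0)) E2; simpblk e2_00.
have e1_10 := congr1 (fun M => submxblock M (inord 1) (inord 0)) E1; simpblk e1_10.
have e1_11 := congr1 (fun M => submxblock M (inord 1) (inord 1)) E1; simpblk e1_11.
have e1_12 := congr1 (fun M => submxblock M (inord 1) (inord 2)) E1; simpblk e1_12.
have e1_13 := congr1 (fun M => submxblock M (inord 1) (inord 3)) E1; simpblk e1_13.
have e2_10 := congr1 (fun M => submxblock M (inord 1) (inord 0)) E2; simpblk e2_10.
have e1_21 := congr1 (fun M => submxblock M (inord 2) (inord 1)) E1; simpblk e1_21.
have e1_22 := congr1 (fun M => submxblock M (inord 2) (inord 2)) E1; simpblk e1_22.
have e1_23 := congr1 (fun M => submxblock M (inord 2) (inord 3)) E1; simpblk e1_23.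
have e2_20 := congr1 (fun M => submxblock M (inord 2) (inord 0)) E2; simpblk e2_20.
have e1_31 := congr1 (fun M => submxblock M (inord 3) (inord 1)) E1; simpblk e1_31.
have e1_32 := congr1 (fun M => submxblock M (inord 3) (inord 2)) E1; simpblk e1_32.
have e1_33 := congr1 (fun M => submxblock M (inord 3) (inord 3)) E1; simpblk e1_33.
have e2_30 := congr1 (fun M => submxblock M (inord 3) (inord 0)) E2; simpblk e2_30.
have e1_42 := congr1 (fun M => submxblock M (inord 4) (inord 2)) E1; simpblk e1_42.
have e1_43 := congr1 (fun M => submxblock M (inord 4) (inord 3)) E1; simpblk e1_43.
have e1_44 := congr1 (fun M => submxblock M (inord 4) (inord 4)) E1; simpblk e1_44.
have e1_45 := congr1 (fun M => submxblock M (inord 4) (inord 5)) E1; simpblk e1_45.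
have e1_52 := congr1 (fun M => submxblock M (inord 5) (inord 2)) E1; simpblk e1_52.
have e1_53 := congr1 (fun M => submxblock M (inord 5) (inord 3)) E1; simpblk e1_53.
have e1_54 := congr1 (fun M => submxblock M (inord 5) (inord 4)) E1; simpblk e1_54.
have e1_55 := congr1 (fun M => submxblock M (inord 5) (inord 5)) E1; simpblk e1_55.
have e1_64 := congr1 (fun M => submxblock M (inord 6) (inord 4)) E1; simpblk e1_64.
have e1_65 := congr1 (fun M => submxblock M (inord 6) (inord 5)) E1; simpblk e1_65.
have e2_63 := congr1 (fun M => submxblock M (inord 6) (inord 3)) E2; simpblk e2_63.
have e1_74 := congr1 (fun M => submxblock M (inord 7) (inord 4)) E1; simpblk e1_74.
have e1_75 := congr1 (fun M => submxblock M (inord 7) (inord 5)) E1; simpblk e1_75.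
have e2_73 := congr1 (fun M => submxblock M (inord 7) (inord 3)) E2; simpblk e2_73.
have e1_86 := congr1 (fun M => submxblock M (inord 8) (inord 6)) E1; simpblk e1_86.
have e1_87 := congr1 (fun M => submxblock M (inord 8) (inord 7)) E1; simpblk e1_87.
have e1_02 := congr1 (fun M => submxblock M (inord 0) (inord 2)) E1; simpblk e1_02.
have e1_03 := congr1 (fun M => submxblock M (inord 0) (inord 3)) E1; simpblk e1_03.
have e1_04 := congr1 (fun M => submxblock M (inord 0) (inord 4)) E1; simpblk e1_04.
have e1_05 := congr1 (fun M => submxblock M (inord 0) (inord 5)) E1; simpblk e1_05.
have e1_06 := congr1 (fun M => submxblock M (inord 0) (inord 6)) E1; simpblk e1_06.
have [h5 hA hB] := chase_alg e1_00 e1_01 e2_00 e1_10 e1_11 e1_12 e1_13 e2_10 e1_21 e1_22 e1_23 e2_20 e1_31 e1_32 e1_33 e2_30 e1_42 e1_43 e1_44 e1_45 e1_52 e1_53 e1_54 e1_55 e1_64 e1_65 e2_63 e1_74 e1_75 e2_73 e1_86 e1_87.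
set P := submxblock S (inord 0) (inord 0) in h5 hA hB.
have Pu : P \in unitmx.
  have := congr1 (fun M => submxblock M (inord 0) (inord 0)) (mulmxV Su).
  rewrite blk_scalar eqxx blkM (big9 (V := 'M[F]_n)).
  rewrite -e1_00 -e1_01 -e2_00 -e1_02 -e1_03 -e1_04 -e1_05 -e1_06 !mul0mx !addr0.
  by case/mulmx1_unit.
have h53 := scal_cancel n0 Pu h5.
have ed : d = a ^+ 2.
  apply/eqP; rewrite -subr_eq0; apply/eqP.
  have a3 : a ^+ 3 != 0 by rewrite expf_eq0.
  apply: (mulfI a3); rewrite mulr0 mulrBr -h53 -exprD.
  by rewrite subrr.
rewrite ed -exprD in hA hB.
have a4 : a ^+ 4 != 0 by rewrite expf_eq0.
move/(scalerI a4): hA => hA.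
move/(scalerI a4): hB => hB.
exists P => //; split.
- by rewrite -mulmxA hA mulKmx.
- by rewrite -mulmxA hB mulKmx.
Qed.

End Design.

Arguments P1 {F}. Arguments P2 {F}. Arguments p1 {F}. Arguments p2 {F}.

Section D2.
Variable F : fieldType.
Variable n : nat.
Local Notation m := (\sum_(i < 9) n)%N.
Lemma comm12 (A B : 'M[F]_n) :
  mxsubst P1 A B *m mxsubst P2 A B = mxsubst P2 A B *m mxsubst P1 A B.
Proof.
apply/mxblockP => i j.
case: (ltnP (wt i) (wt j + 3)) => h.
  by rewrite (Sh_mul (Sh_M1 A B) (Sh_M2 A B)) // (Sh_mul (Sh_M2 A B) (Sh_M1 A B)).
move: i j h => [i hi] [j hj] /= h.
rewrite -[Ordinal hi]inord_val -[Ordinal hj]inord_val /=.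
case: i hi h => [|[|[|[|[|[|[|[|[|i]]]]]]]]] hi h //;
case: j hj h => [|[|[|[|[|[|[|[|[|j]]]]]]]]] hj h //.
all: rewrite !blkM !(big9 (V := 'M[F]_n)) !blkE !P1E // !P2E //=.
all: do 3 rewrite ?sc0 ?mul0mx ?mulmx0 ?add0r ?addr0 ?mulmx1 ?mul1mx.
all: try done.
Qed.
End D2.

Section D3.
Variable F : fieldType.
Variable n : nat.
Local Notation m := (\sum_(i < 9) n)%N.

Lemma span2_of p (X Y : 'M[F]_p) u1 v1 u2 v2 :
  X u1 v1 = 1 -> Y u1 v1 = 0 -> X u2 v2 = 0 -> Y u2 v2 = 1 -> span2 X Y.
Proof.
move=> x1 y1 x2 y2; apply/eqP; rewrite eqn_leq rank_leq_row /=.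
set Z := col_mx (mxvec X) (mxvec Y).
pose kk (l : 'I_2) := if l == 0 then mxvec_index u1 v1 else mxvec_index u2 v2.
pose Bm := \matrix_(k, l) ((k == kk l)%:R : F).
have key : Z *m Bm = 1%:M.
  apply/matrixP => i l; rewrite !mxE.
  rewrite (bigD1 (kk l)) //= {1}/Bm mxE eqxx mulr1 big1 ?addr0; last first.
    by move=> k /negbTE hk; rewrite /Bm mxE hk mulr0.
  case: i => [[|[|]]] // hi.
    have -> : Ordinal hi = lshift 1 (ord0 : 'I_1) by apply/val_inj.
    rewrite col_mxEu; case: l => [[|[|]]] // hl; rewrite /kk /= mxvecE //.
  have -> : Ordinal hi = rshift 1 (ord0 : 'I_1) by apply/val_inj.
  rewrite col_mxEd; case: l => [[|[|]]] // hl; rewrite /kk /= mxvecE //.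
have := mxrankM_maxl Z Bm; rewrite key mxrank1 //.
Qed.

Lemma mxsubst_entry P (A B : 'M[F]_n) (i j : 'I_9) r c :
  mxsubst P A B (tagnat.Rank i r) (tagnat.Rank j c) = nceval (P i j) A B r c.
Proof. by rewrite -(blkE P A B i j) /submxblock /mxsub mxE. Qed.


Lemma nceval_conj (S : 'M[F]_n) (p : ncpoly F) A B : S \in unitmx ->
  invmx S *m nceval p A B *m S = nceval p (invmx S *m A *m S) (invmx S *m B *m S).
Proof.
move=> Su; elim: p => [c| | |p IHp q IHq|p IHp q IHq] //=.
- by rewrite scalar_mxC -mulmxA mulVmx // mulmx1.
- by rewrite mulmxDr mulmxDl IHp IHq.
- by rewrite -IHp -IHq !mulmxA mulmxK.
Qed.

Lemma mxdiag_mul (D1 D2 : 'I_9 -> 'M[F]_n) :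
  \mxdiag_i D1 i *m \mxdiag_i D2 i = \mxdiag_i (D1 i *m D2 i).
Proof.
rewrite {1}/mxdiag mul_mxblock_mxdiag /mxdiag; apply/eq_mxblock => i j.
by case: eqVneq => [->|_]; rewrite ?conform_mx_id ?mul0mx.
Qed.

Lemma lift_sim (A B A' B' : 'M[F]_n) : simpair A B A' B' ->
  exists2 D : 'M[F]_m, D \in unitmx &
    (forall P, invmx D *m mxsubst P A B *m D = mxsubst P A' B').
Proof.
case=> S Su [hA hB].
pose D : 'M[F]_m := \mxdiag_(i < 9) S.
pose Di : 'M[F]_m := \mxdiag_(i < 9) invmx S.
have hD : D *m Di = 1%:M.
  by rewrite mxdiag_mul mulmxV // (mxdiagZ (p_ := fun _ => n)).
have [Du _] := mulmx1_unit hD.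
have eD : invmx D = Di by rewrite -[LHS]mulmx1 -hD mulmxA mulVmx // mul1mx.
exists D => // Q; rewrite eD /Di /D /mxsubst.
rewrite mul_mxdiag_mxblock mul_mxblock_mxdiag; apply/eq_mxblock => i j.
by rewrite nceval_conj // hA hB.
Qed.

Lemma sim_space_sim (Q1 Q2 : 'I_9 -> 'I_9 -> ncpoly F) (A B A' B' : 'M[F]_n) : simpair A B A' B' ->
  space_sim (mxsubst Q1 A B) (mxsubst Q2 A B) (mxsubst Q1 A' B') (mxsubst Q2 A' B').
Proof.
move=> /lift_sim[D Du hD].
exists 1, 0, 0, 1; split; first by rewrite mulr1 mulr0 subr0 oner_eq0.
exists D => //; by rewrite !scale1r !scale0r addr0 add0r !hD.
Qed.


Lemma obj1 (A B : 'M[F]_n) : (0 < n)%N ->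
  comm_space (mxsubst P1 A B) (mxsubst P2 A B).
Proof.
move=> n0; split; last exact: comm12.
pose r0 : 'I_n := Ordinal n0.
apply: (@span2_of _ _ _ (tagnat.Rank (inord 1) r0) (tagnat.Rank (inord 0) r0)
   (tagnat.Rank (inord 3) r0) (tagnat.Rank (inord 0) r0));
  by rewrite mxsubst_entry ?P1E ?P2E //= mxE eqxx ?mulr1n ?mul0rn.
Qed.

Lemma dir1 (A B A' B' : 'M[F]_n) : (0 < n)%N ->
  space_sim (mxsubst P1 A B) (mxsubst P2 A B) (mxsubst P1 A' B') (mxsubst P2 A' B') ->
  simpair A B A' B'.
Proof.
move=> n0 [a [b [c [d [hdet [S Su [h1 h2]]]]]]].
set M1 := mxsubst P1 A B in h1 h2 *; set M2 := mxsubst P2 A B in h1 h2 *.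
set N1 := mxsubst P1 A' B' in h1 h2 *; set N2 := mxsubst P2 A' B' in h1 h2 *.
have E1 : (a *: M1 + b *: M2) *m S = S *m N1 by rewrite -h1 !mulmxA mulmxV // mul1mx.
have E2 : (c *: M1 + d *: M2) *m S = S *m N2 by rewrite -h2 !mulmxA mulmxV // mul1mx.
set Y := c *: M1 + d *: M2 in E2.
have e2 : Y *m Y *m S = S *m N2 *m N2 by rewrite -mulmxA E2 mulmxA E2.
have e3 : Y *m Y *m Y *m S = S *m N2 *m N2 *m N2 by rewrite -mulmxA E2 mulmxA e2.
have Y3 : Y *m Y *m Y = 0.
  rewrite -[Y *m Y *m Y](mulmxK Su) e3.
  have -> : S *m N2 *m N2 *m N2 = S *m (N2 *m N2 *m N2) by rewrite !mulmxA.
  by rewrite /N2 M2_cube mulmx0 mul0mx.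
have := congr1 (fun M => submxblock M (inord 4) (inord 0)) Y3.
rewrite submxblock0 /Y cube_lead; first last.
- by rewrite !inordK.
- exact: Sh_scale (Sh_M2 A B).
- exact: Sh_scale (Sh_M1 A B).
rewrite -!scalemxAl -!scalemxAr -!scalemxAl !scalerA blkZ /M1 M1cube40 => hc.
have c3 : c * (c * c) = 0.
  have := congr1 (fun M : 'M[F]_n => M (Ordinal n0) (Ordinal n0)) hc.
  by rewrite !mxE eqxx mulr1n mulr1.
have c0 : c = 0 by apply/eqP; move/eqP: c3; rewrite !mulf_eq0 !orbb.
rewrite /Y c0 scale0r add0r in E2.
have a0 : a != 0 by apply: contraNneq hdet => ->; rewrite c0 !mul0r mulr0 subrr.
exact: chase n0 Su a0 E1 E2.
Qed.

End D3.

Section D4.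
Variable F : fieldType.
Variable n : nat.
Local Notation m := (\sum_(i < 9) n)%N.

Lemma Sh_exp r (N : 'M[F]_m) k : Sh r N -> Sh (r * k.+1) (N ^+ k.+1).
Proof.
move=> hN; elim: k => [|k IH]; first by rewrite expr1 muln1.
by rewrite exprS mulnS -mulmxE; apply: Sh_mul.
Qed.

Lemma not_unit0 : (0 < n)%N -> (0 : 'M[F]_m) \notin unitmx.
Proof.
move=> n0; apply/negP => h; have := mulmxV h; rewrite mul0mx.
pose i0 : 'I_m := tagnat.Rank (inord 0 : 'I_9) (Ordinal n0).
move/(congr1 (fun M : 'M[F]_m => M i0 i0)); rewrite !mxE eqxx mulr1n => /eqP.
by rewrite eq_sym oner_eq0.
Qed.

Lemma unit_1pN (N : 'M[F]_m) : Sh 1 N -> (1%:M + N) \in unitmx.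
Proof.
move=> hN.
have hx : Sh 1 (- N) by move=> i j h; rewrite submxblockN hN ?oppr0.
have x6 : (- N) ^+ 6 = 0 := Sh_top (isT : (5 < 1 * 6)%N) (Sh_exp (k := 5) hx).
have := subrX1 (- N) 6; rewrite x6 sub0r => e.
have key : (1%:M + N) * \sum_(i < 6) (- N) ^+ i = 1.
  by apply: oppr_inj; rewrite -mulNr opprD addrC -e.
by case: (mulmx1_unit key).
Qed.

Lemma unit_cpN c (N : 'M[F]_m) : c != 0 -> Sh 1 N -> (c%:M + N) \in unitmx.
Proof.
move=> c0 hN.
have -> : c%:M + N = c *: (1%:M + c^-1 *: N).
  by rewrite scalerDr scalerA divff // scale1r scale_scalar_mx mulr1.
by rewrite unitmxZ ?unitfE //; apply: unit_1pN; apply: Sh_scale.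
Qed.

Definition Q1 (i j : 'I_9) : ncpoly F :=
  NCadd (NCconst ((nat_of_ord i == nat_of_ord j)%:R)) (P1 i j).

Lemma Q1E (A B : 'M[F]_n) : mxsubst Q1 A B = 1%:M + mxsubst P1 A B.
Proof.
rewrite /mxsubst -(mxdiagZ (p_ := fun _ => n)) /mxdiag -mxblockD.
apply/eq_mxblock => i j /=.
case: (eqVneq i j) => [<-|hij]; first by rewrite !eqxx conform_mx_id.
by rewrite -[nat_of_ord i == nat_of_ord j]/(i == j) (negbTE hij) sc0.
Qed.

Lemma obj2 (A B : 'M[F]_n) : (0 < n)%N ->
  comm_space_nonsing (mxsubst Q1 A B) (mxsubst P2 A B).
Proof.
move=> n0; split; last first.
  by exists 1, 0; rewrite scale1r scale0r addr0 Q1E; apply: unit_1pN; apply: Sh_M1.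
split; last by rewrite Q1E mulmxDl mulmxDr mul1mx mulmx1 comm12.
pose r0 : 'I_n := Ordinal n0.
apply: (@span2_of _ _ _ _ (tagnat.Rank (inord 1) r0) (tagnat.Rank (inord 0) r0)
   (tagnat.Rank (inord 3) r0) (tagnat.Rank (inord 0) r0));
  by rewrite mxsubst_entry /Q1 /P1 /P2 ?inordK //= ?sc0 ?add0r ?addr0 ?mxE ?eqxx ?mulr1n ?mul0rn.
Qed.

Lemma dir2 (A B A' B' : 'M[F]_n) : (0 < n)%N ->
  space_sim (mxsubst Q1 A B) (mxsubst P2 A B) (mxsubst Q1 A' B') (mxsubst P2 A' B') ->
  simpair A B A' B'.
Proof.
move=> n0 [a [b [c [d [hdet [S Su [h1 h2]]]]]]].
rewrite !Q1E in h1 h2.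
set M1 := mxsubst P1 A B in h1 h2; set M2 := mxsubst P2 A B in h1 h2.
set N1 := mxsubst P1 A' B' in h1 h2; set N2 := mxsubst P2 A' B' in h1 h2.
have SiU : invmx S \in unitmx by rewrite unitmx_inv.
have c0 : c = 0.
  apply/eqP/negPn/negP => hc.
  have hY : c *: (1%:M + M1) + d *: M2 = c%:M + (c *: M1 + d *: M2).
    by rewrite scalerDr scale_scalar_mx mulr1 addrA.
  have u : N2 \in unitmx.
    rewrite -h2 !unitmx_mul SiU Su hY unit_cpN //.
    by apply: Sh_add; apply: Sh_scale; [exact: Sh_M1 | exact: Sh_weak (Sh_M2 A B)].
  have : N2 *m N2 *m N2 \in unitmx by rewrite !unitmx_mul u.
  by rewrite /N2 M2_cube (negbTE (not_unit0 n0)).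
have e1 : invmx S *m ((a - 1)%:M + (a *: M1 + b *: M2)) *m S = N1.
  apply: (@addrI _ 1%:M); rewrite -h1.
  have -> : (1%:M : 'M[F]_m) = invmx S *m 1%:M *m S by rewrite mulmx1 mulVmx.
  rewrite -mulmxDl -mulmxDr mulmx1 mulVmx //; congr (_ *m _ *m _).
  rewrite scalerDr scale_scalar_mx mulr1 !addrA -raddfD /=.
  by rewrite [1 + _]addrC subrK.
have a1 : a = 1.
  apply/eqP/negPn/negP => ha.
  have u : N1 \in unitmx.
    rewrite -e1 !unitmx_mul SiU Su unit_cpN ?subr_eq0 //.
    by apply: Sh_add; apply: Sh_scale; [exact: Sh_M1 | exact: Sh_weak (Sh_M2 A B)].
  have := Sh_top (isT : (5 < 1 * 6)%N) (Sh_exp (k := 5) (Sh_M1 A' B')).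
  move=> h6; have : N1 ^+ 6 \in unitmx by rewrite !exprS expr0 -!mulmxE !unitmx_mul u unitmx1.
  by rewrite /N1 h6 (negbTE (not_unit0 n0)).
apply: (dir1 n0); exists 1, b, 0, d; split.
  by move: hdet; rewrite a1 c0.
exists S => //; split.
  by move: e1; rewrite a1 subrr sc0 add0r => e; exact: e.
by move: h2; rewrite c0 !scale0r !add0r => e; exact: e.
Qed.

End D4.

Theorem theorem1 (F : fieldType) :
  wild (@comm_space F) (@space_sim F) /\
  ((exists a : F, a != 0 /\ a != 1) ->
   wild (@comm_space_nonsing F) (@space_sim F)).
Proof.
split.
  exists 9, P1, P2; split => [n A B n0 | n A B A' B' n0]; first exact: obj1.
  by split; [exact: dir1 | exact: sim_space_sim].
move=> _; exists 9, (@Q1 F), P2; split => [n A B n0 | n A B A' B' n0].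
  exact: obj2.
by split; [exact: dir2 | exact: sim_space_sim].
Qed.
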